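(* Let $T\in\mathbb{N}$ and let $\mathcal{A}=\{O_1,\dots,O_k\}$ be a finite action set of traceless observables on $\mathbb{C}^d$ such that there exist two distinct $O_a,O_b\in\mathcal{A}$ with eigenvectors $|\psi_A\rangle,|\psi_B\rangle$ for their respective largest eigenvalues satisfying, for all $i\ne a$ and $j\ne b$, $$\langle\psi_A|O_a|\psi_A\rangle>\langle\psi_A|O_i|\psi_A\rangle\quad\text{and}\quad\langle\psi_B|O_b|\psi_B\rangle>\langle\psi_B|O_j|\psi_B\rangle.$$ Then for any policy $\pi$ there exists an environment $\rho\in\mathcal{S}_d$ such that $$\mathbb{E}_{\rho,\pi}\big[R_T(\mathcal{A},\rho,\pi)\big]\ge C_{\mathcal{A}}\sqrt T,$$ where $C_{\mathcal{A}}>0$ is a constant that depends only on the action set.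
   Context: $\mathcal{S}_d$ is the set of density matrices on $\mathbb{C}^d$; observables are Hermitian $d\times d$ matrices. Discrete multi-armed quantum bandit: in each round $t=1,\dots,T$ the learner receives a copy of the unknown state $\rho$, chooses $A_t\in[k]$ according to a policy $\pi=(\pi_t)$, where $\pi_t(\cdot\mid a_1,x_1,\dots,a_{t-1},x_{t-1})$ is a probability distribution on $[k]$, and measures $\rho$ in the eigenbasis of $O_{A_t}=\sum_i\lambda_{A_t,i}\Pi_{A_t,i}$ (spectral decomposition), receiving reward $X_t=\lambda_{A_t,i}$ with probability $\mathrm{Tr}(\rho\Pi_{A_t,i})$. The regret is $R_T(\mathcal{A},\rho,\pi)=\sum_{t=1}^T\big(\max_{O\in\mathcal{A}}\mathrm{Tr}(\rho O)-\mathrm{Tr}(\rho O_{A_t})\big)$ and $\mathbb{E}_{\rho,\pi}$ is the expectation over the induced process. *)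

(* Defs.v *)
From mathcomp Require Import all_boot all_algebra.
From mathcomp Require Import reals.
From mathcomp Require Import complex.
Set Implicit Arguments. Unset Strict Implicit. Unset Printing Implicit Defensive.
Import GRing.Theory Num.Theory.
Local Open Scope ring_scope.

Section QBandit.
Variable R : realType.
Local Notation C := R[i].

Definition adjmx (m n : nat) (A : 'M[C]_(m, n)) : 'M[C]_(n, m) :=
  \matrix_(i, j) Num.conj (A j i).

Definition is_hermitian (d : nat) (A : 'M[C]_d) : Prop := adjmx A = A.

Definition qform (d : nat) (A : 'M[C]_d) (v : 'cV[C]_d) : C :=
  (adjmx v *m A *m v) 0 0.

Definition density (d : nat) (rho : 'M[C]_d) : Prop :=
  [/\ is_hermitian rho, (forall v : 'cV[C]_d, 0 <= qform rho v) & \tr rho = 1].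

Definition projector (d : nat) (P : 'M[C]_d) : Prop :=
  is_hermitian P /\ P *m P = P.

Definition spectral_decomp (d m : nat) (O : 'M[C]_d)
    (lam : 'I_m -> R) (P : 'I_m -> 'M[C]_d) : Prop :=
  [/\ injective lam,
      forall i, projector (P i) /\ P i != 0,
      forall i j, i != j -> P i *m P j = 0,
      \sum_i P i = 1%:M
    & O = \sum_i ((lam i)%:C)%C *: P i].

Definition top_eigvec (d : nat) (O : 'M[C]_d) (psi : 'cV[C]_d) : Prop :=
  psi != 0 /\
  exists mu : C, O *m psi = mu *: psi /\
    forall (nu : C) (v : 'cV[C]_d), v != 0 -> O *m v = nu *: v -> nu <= mu.

(* A policy: pi t h a = probability of choosing action a at round t
   given the history h = [(a_1,x_1);...;(a_{t-1},x_{t-1})]. *)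
Definition policy (k : nat) := nat -> seq ('I_k * R) -> 'I_k -> R.

Definition valid_policy (k : nat) (pi : policy k) : Prop :=
  forall t h, (forall a, 0 <= pi t h a) /\ \sum_a pi t h a = 1.

Definition mean (d : nat) (rho O : 'M[C]_d) : R := complex.Re (\tr (rho *m O)).

Definition gap (d k : nat) (O : 'I_k -> 'M[C]_d) (rho : 'M[C]_d) (a : 'I_k) : R :=
  \big[Num.max/mean rho (O a)]_(b < k) mean rho (O b) - mean rho (O a).

(* Expected regret accumulated over n further rounds, starting from
   history h (so the next round is t = size h + 1), under the process
   induced by rho and pi: action a drawn from pi_t(.|h), then outcome i
   of the measurement of O_a observed with probability Tr(rho P_{a,i}),
   yielding reward lam_{a,i}. *)
Fixpoint exp_regret_from (d k : nat) (O : 'I_k -> 'M[C]_d) (m : 'I_k -> nat)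
    (lam : forall a, 'I_(m a) -> R) (P : forall a, 'I_(m a) -> 'M[C]_d)
    (rho : 'M[C]_d) (pi : policy k) (n : nat) (h : seq ('I_k * R)) : R :=
  match n with
  | 0 => 0
  | n'.+1 =>
      \sum_(a < k) pi (size h).+1 h a *
        (gap O rho a +
         \sum_(i < m a) mean rho (P a i) *
            exp_regret_from O lam P rho pi n' (rcons h (a, lam a i)))
  end.

Definition exp_regret (d k : nat) (O : 'I_k -> 'M[C]_d) (m : 'I_k -> nat)
    (lam : forall a, 'I_(m a) -> R) (P : forall a, 'I_(m a) -> 'M[C]_d)
    (rho : 'M[C]_d) (pi : policy k) (T : nat) : R :=
  exp_regret_from O lam P rho pi T [::].

End QBandit.

(* Main.v *)
Require Import Defs.
From mathcomp Require Import all_boot all_algebra.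
From mathcomp Require Import reals.
From mathcomp Require Import complex.
From mathcomp Require Import ring lra.
Import mathcomp.order.order.Order.TTheory GRing.Theory Num.Theory.
Local Open Scope ring_scope.

Section S.
Variable R : realType.
Local Notation C := R[i].

Lemma adjmxM m n p (A : 'M[C]_(m, n)) (B : 'M[C]_(n, p)) :
  adjmx (A *m B) = adjmx B *m adjmx A.
Proof.
apply/matrixP => i j; rewrite !mxE rmorph_sum; apply: eq_bigr => l _.
by rewrite !mxE rmorphM mulrC.
Qed.

Lemma adjmxK m n (A : 'M[C]_(m, n)) : adjmx (adjmx A) = A.
Proof. by apply/matrixP => i j; rewrite !mxE conjCK. Qed.

Lemma adjmxD m n (A B : 'M[C]_(m, n)) : adjmx (A + B) = adjmx A + adjmx B.
Proof. by apply/matrixP => i j; rewrite !mxE rmorphD. Qed.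

Lemma adjmxZ m n c (A : 'M[C]_(m, n)) : adjmx (c *: A) = c^* *: adjmx A.
Proof. by apply/matrixP => i j; rewrite !mxE rmorphM. Qed.

Lemma adj_ge0 n (w : 'cV[C]_n) : 0 <= (adjmx w *m w) 0 0.
Proof.
rewrite !mxE; apply: sumr_ge0 => j _; rewrite !mxE mulrC; exact: mul_conjC_ge0.
Qed.

Lemma adj_eq0 n (w : 'cV[C]_n) : (adjmx w *m w) 0 0 = 0 -> w = 0.
Proof.
rewrite !mxE => /eqP; rewrite psumr_eq0 => [/allP H|j _]; last first.
  by rewrite !mxE mulrC mul_conjC_ge0.
apply/matrixP => i j; rewrite ord1 mxE.
have := H i (mem_index_enum _); rewrite !mxE mulrC mul_conjC_eq0 => /eqP //.
Qed.

Lemma tr_qform n (v : 'cV[C]_n) X : \tr (v *m adjmx v *m X) = qform X v.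
Proof.
by rewrite -mulmxA mxtrace_mulC /qform /mxtrace big_ord1.
Qed.

Lemma conj_real (x : R) : (x%:C)%C^* = (x%:C)%C :> C.
Proof. by apply: conj_Creal; rewrite complex_real. Qed.

Lemma ReD (x y : C) : complex.Re (x + y) = complex.Re x + complex.Re y.
Proof. by case: x; case: y. Qed.

Lemma ReM (c : R) (y : C) : complex.Re ((c%:C)%C * y) = c * complex.Re y.
Proof. by case: y => a b /=; rewrite mul0r subr0. Qed.

Lemma Re_ge0 (x : C) : 0 <= x -> 0 <= complex.Re x.
Proof. by rewrite lecE => /andP[]. Qed.

Lemma Re_lt (x y : C) : x < y -> complex.Re x < complex.Re y.
Proof. by rewrite ltcE => /andP[]. Qed.


Variable d : nat.
Definition nrm (psi : 'cV[C]_d) : C := (adjmx psi *m psi) 0 0.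
Definition rk1 (psi : 'cV[C]_d) : 'M[C]_d := (nrm psi)^-1 *: (psi *m adjmx psi).
Definition mix (l : R) (r1 r2 : 'M[C]_d) : 'M[C]_d :=
  (l%:C)%C *: r1 + ((1-l)%:C)%C *: r2.

Lemma qformD (A B : 'M[C]_d) v : qform (A + B) v = qform A v + qform B v.
Proof. by rewrite /qform mulmxDr mulmxDl mxE. Qed.

Lemma qformZ c (A : 'M[C]_d) v : qform (c *: A) v = c * qform A v.
Proof. by rewrite /qform -scalemxAr -scalemxAl mxE. Qed.

Lemma nrm_ge0 psi : 0 <= nrm psi.
Proof. exact: adj_ge0. Qed.

Lemma nrm_neq0 psi : psi != 0 -> nrm psi != 0.
Proof. by move=> H; apply/eqP => /adj_eq0 E; rewrite E eqxx in H. Qed.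

Lemma tr_rk1 psi X : \tr (rk1 psi *m X) = (nrm psi)^-1 * qform X psi.
Proof. by rewrite /rk1 -scalemxAl mxtraceZ tr_qform. Qed.

Lemma density_rk1 psi : psi != 0 -> density (rk1 psi).
Proof.
move=> nz; split.
- rewrite /is_hermitian /rk1 adjmxZ adjmxM adjmxK; congr (_ *: _).
  by apply: geC0_conj; rewrite invr_ge0 nrm_ge0.
- move=> v; rewrite /rk1 qformZ; apply: mulr_ge0; first by rewrite invr_ge0 nrm_ge0.
  rewrite /qform; have -> : adjmx v *m (psi *m adjmx psi) *m v =
    adjmx (adjmx psi *m v) *m (adjmx psi *m v) by rewrite adjmxM adjmxK !mulmxA.
  exact: adj_ge0.
- have := tr_rk1 psi 1%:M; rewrite mulmx1 => ->.
  rewrite /qform mulmx1 mulVf //; exact: nrm_neq0.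
Qed.

Lemma mean_mix l r1 r2 X :
  mean (mix l r1 r2) X = l * mean r1 X + (1 - l) * mean r2 X.
Proof.
by rewrite /mean /mix mulmxDl -!scalemxAl mxtraceD !mxtraceZ ReD !ReM.
Qed.

Lemma density_mix l r1 r2 : 0 <= l <= 1 -> density r1 -> density r2 ->
  density (mix l r1 r2).
Proof.
move=> /andP[l0 l1] [h1 p1 t1] [h2 p2 t2]; split.
- by rewrite /is_hermitian /mix adjmxD !adjmxZ !conj_real h1 h2.
- move=> v; rewrite /mix qformD !qformZ; apply: addr_ge0; apply: mulr_ge0 => //.
    by rewrite ler0c.
  by rewrite ler0c subr_ge0.
- rewrite /mix mxtraceD !mxtraceZ t1 t2 !mulr1 -rmorphD /= addrC subrK //.
Qed.

Lemma mean_sum (r : 'M[C]_d) I (s : seq I) (F : I -> 'M[C]_d) :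
  mean r (\sum_(i <- s) F i) = \sum_(i <- s) mean r (F i).
Proof.
apply: (big_morph (@mean R d r)) => [x y|]; first by rewrite /mean mulmxDr mxtraceD ReD.
by rewrite /mean mulmx0 mxtrace0.
Qed.

Lemma mean_one (r : 'M[C]_d) : density r -> mean r 1%:M = 1.
Proof. by case=> _ _ t; rewrite /mean mulmx1 t. Qed.

Lemma mean_proj_ge0 psi Q : psi != 0 -> projector Q -> 0 <= mean (rk1 psi) Q.
Proof.
move=> nz [hQ iQ]; rewrite /mean tr_rk1; apply: Re_ge0; apply: mulr_ge0.
  by rewrite invr_ge0 nrm_ge0.
rewrite /qform -{1}iQ -{1}hQ mulmxA -adjmxM -mulmxA; exact: adj_ge0.
Qed.

Lemma mean_rk1_lt psi X Y : psi != 0 -> qform X psi < qform Y psi ->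
  mean (rk1 psi) X < mean (rk1 psi) Y.
Proof.
move=> nz H; rewrite /mean !tr_rk1; apply: Re_lt; rewrite ltr_pM2l //.
by rewrite invr_gt0 lt0r nrm_neq0 ?nrm_ge0.
Qed.


Lemma step_ineq (g g1 g2 u v : R) : 0 <= g1 -> 0 <= g2 -> g <= g1 + g2 -> 0 <= g ->
  0 <= u -> 0 <= v -> g * (3/2 * (u * v) - (u^+2 + v^+2)/2) <= u^+2 * g1 + v^+2 * g2.
Proof.
move=> h1 h2 h12 hg hu hv.
have Q : 3/2 * (u * v) - (u^+2 + v^+2)/2 <= Num.min (u^+2) (v^+2).
  rewrite le_min; apply/andP; split.
    have := sqr_ge0 (u - v/2); have := sqr_ge0 v; nra.
  have := sqr_ge0 (v - u/2); have := sqr_ge0 u; nra.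
have [uv|vu] := leP (u^+2) (v^+2).
- have E : Num.min (u^+2) (v^+2) = u^+2 by rewrite min_l.
  rewrite E in Q.
  have : g * (3/2 * (u * v) - (u^+2 + v^+2)/2) <= g * u^+2 by rewrite ler_wpM2l.
  nra.
- have E : Num.min (u^+2) (v^+2) = v^+2 by rewrite min_r // ltW.
  rewrite E in Q.
  have : g * (3/2 * (u * v) - (u^+2 + v^+2)/2) <= g * v^+2 by rewrite ler_wpM2l.
  nra.
Qed.

Lemma bernoulli (b : R) n : 0 <= b <= 1 -> 1 - n%:R * (1 - b) <= b ^+ n.
Proof.
move=> /andP[b0 b1]; elim: n => [|n IH]; first by rewrite expr0 mul0r subr0.
rewrite exprS -natr1.
have : b * (1 - n%:R * (1 - b)) <= b * b ^+ n by rewrite ler_wpM2l.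
have : 0 <= n%:R * (1 - b) * (1 - b) by rewrite !mulr_ge0 // subr_ge0.
move: (b ^+ n) (n%:R : R) => x N; nra.
Qed.


Variables (k : nat) (O : 'I_k -> 'M[C]_d) (m : 'I_k -> nat)
  (lam : forall a, 'I_(m a) -> R) (P : forall a, 'I_(m a) -> 'M[C]_d).

Lemma gap_ge0 (r : 'M[C]_d) a : 0 <= gap O r a.
Proof. by rewrite /gap subr_ge0; apply: (le_bigmax _ (fun b => mean r (O b)) a). Qed.

Lemma gap_lb (r : 'M[C]_d) a b : mean r (O b) - mean r (O a) <= gap O r a.
Proof. by rewrite /gap lerD2r; apply: (le_bigmax _ (fun b => mean r (O b)) b). Qed.

Lemma regret_lb (r1 r2 : 'M[C]_d) (pi : policy R k) (g beta : R) :
  valid_policy pi ->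
  (forall a i, 0 <= mean r1 (P a i)) -> (forall a i, 0 <= mean r2 (P a i)) ->
  (forall a, \sum_i mean r1 (P a i) = 1) -> (forall a, \sum_i mean r2 (P a i) = 1) ->
  (forall a, g <= gap O r1 a + gap O r2 a) -> 0 <= g -> 0 <= beta ->
  (forall a, beta <= \sum_i Num.sqrt (mean r1 (P a i)) * Num.sqrt (mean r2 (P a i))) ->
  forall n h u v, 0 <= u -> 0 <= v ->
  3/2 * g * (\sum_(s < n) beta ^+ s) * (u * v) - n%:R * (g / 2) * (u^+2 + v^+2)
   <= u^+2 * exp_regret_from O lam P r1 pi n h + v^+2 * exp_regret_from O lam P r2 pi n h.
Proof.
move=> vp p1 p2 s1 s2 hg g0 b0 hb.
elim=> [|n IH] h u v u0 v0.
  by rewrite big_ord0 /= !(mulr0, mul0r, subr0, addr0).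
rewrite [exp_regret_from _ _ _ _ _ n.+1 _]/= [exp_regret_from _ _ _ _ _ n.+1 _]/=.
set S := \sum_(s < n) beta ^+ s.
have eS : \sum_(s < n.+1) beta ^+ s = 1 + beta * S.
  by rewrite big_ord_recl expr0 /S mulr_sumr; congr (_ + _); apply: eq_bigr => s _; rewrite exprS.
rewrite eS.
have [pi0 pi1] := vp (size h).+1 h.
set L := (X in X <= _).
have Ha : forall a, L <= u^+2 * (gap O r1 a + \sum_(i < m a) mean r1 (P a i) *
        exp_regret_from O lam P r1 pi n (rcons h (a, lam a i))) +
     v^+2 * (gap O r2 a + \sum_(i < m a) mean r2 (P a i) *
        exp_regret_from O lam P r2 pi n (rcons h (a, lam a i))).
  move=> a.
  set p := fun i => mean r1 (P a i); set q := fun i => mean r2 (P a i).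
  set R1 := fun i => exp_regret_from O lam P r1 pi n (rcons h (a, lam a i)).
  set R2 := fun i => exp_regret_from O lam P r2 pi n (rcons h (a, lam a i)).
  have Hi : forall i, 3/2 * g * S * (u * v) * (Num.sqrt (p i) * Num.sqrt (q i)) -
      (n%:R * (g/2) * u^+2 * p i + n%:R * (g/2) * v^+2 * q i)
      <= u^+2 * (p i * R1 i) + v^+2 * (q i * R2 i).
    move=> i; have := IH (rcons h (a, lam a i)) (u * Num.sqrt (p i)) (v * Num.sqrt (q i)).
    rewrite !exprMn !sqr_sqrtr ?p1 ?p2 // ?mulr_ge0 ?sqrtr_ge0 // => /(_ isT isT).
    rewrite -/(R1 i) -/(R2 i) -/S.
    move: (R1 i) (R2 i) (Num.sqrt (p i)) (Num.sqrt (q i)) (p i) (q i) => x y sp sq pp qq.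
    lra.
  have Hs := @ler_sum _ _ (index_enum _) xpredT _ _ (fun i _ => Hi i).
  rewrite sumrB big_split /= -!mulr_sumr big_split /= -!mulr_sumr in Hs.
  have sp : \sum_i p i = 1 := s1 a.
  have sq : \sum_i q i = 1 := s2 a.
  rewrite sp sq in Hs.
  have hw := hb a.
  have A0 : 0 <= 3/2 * g * S * (u * v).
    have S0 : 0 <= S by rewrite /S; apply: sumr_ge0 => s _; exact: exprn_ge0.
    have h32 : 0 <= 3/2 :> R by lra.
    by apply: mulr_ge0; [apply: mulr_ge0; [apply: mulr_ge0|] |apply: mulr_ge0].
  have hw' := ler_wpM2l A0 hw.
  have hst := @step_ineq g _ _ u v (gap_ge0 r1 a) (gap_ge0 r2 a) (hg a) g0 u0 v0.
  rewrite /L -natr1.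
  move: Hs hw' hst; rewrite -/p -/q.
  move: (\sum_i Num.sqrt (p i) * Num.sqrt (q i)) (\sum_i p i * R1 i) (\sum_i q i * R2 i)
     (gap O r1 a) (gap O r2 a) => w x y G1 G2.
  nra.
rewrite -[L]mul1r -pi1 mulr_suml [u^+2 * _]mulr_sumr [v^+2 * _]mulr_sumr -big_split /=.
apply: ler_sum => a _.
have := ler_wpM2l (pi0 a) (Ha a).
move: (gap O r1 a + _) (gap O r2 a + _) (pi (size h).+1 h a) => x y z.
nra.
Qed.

End S.

Section K.
Variable R : realType.

Lemma kink k (qA qB : 'I_k -> R) a b : a != b ->
  (forall x, x != a -> qA x < qA a) -> (forall x, x != b -> qB x < qB b) ->
  exists l0 u, [/\ 0 < l0 < 1,
    forall x, l0 * qA x + (1 - l0) * qB x <= l0 * qA b + (1 - l0) * qB b,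
    l0 * qA u + (1 - l0) * qB u = l0 * qA b + (1 - l0) * qB b
    & qA b - qB b < qA u - qB u].
Proof.
move=> ab HA HB.
pose t x := qA x - qB x.
pose c x := (qB b - qB x) / (t x - t b).
pose S := fun x => t b < t x.
have Sa : S a.
  have := HA b; rewrite eq_sym ab => /(_ isT); have := HB a; rewrite ab => /(_ isT).
  rewrite /S /t; lra.
have ca1 : c a < 1.
  have h1 : 0 < t a - t b by rewrite subr_gt0.
  rewrite /c ltr_pdivrMr // mul1r.
  have := HA b; rewrite eq_sym ab => /(_ isT); rewrite /t; lra.
case: (arg_minP c Sa) => u Su Hmin.
have ub : u != b by apply/eqP => E; move: Su; rewrite /S E ltxx.
have hu : 0 < t u - t b by rewrite subr_gt0.
have cu0 : 0 < c u by rewrite /c divr_gt0 // subr_gt0 HB.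
have cuE : c u * (t u - t b) = qB b - qB u by rewrite /c divfK // gt_eqF.
exists (c u), u; split.
- by rewrite cu0 /= (le_lt_trans (Hmin a Sa)).
- move=> x.
  have [Sx|nSx] := boolP (S x).
    have hx : 0 < t x - t b by rewrite subr_gt0.
    have := Hmin x Sx; rewrite {2}/c ler_pdivlMr // => H.
    move: H; rewrite /t; nra.
  have hx : t x - t b <= 0 by rewrite subr_le0 leNgt.
  have hq : qB x <= qB b.
    by have [->|/HB/ltW //] := eqVneq x b.
  have : c u * (t x - t b) <= 0 by rewrite mulr_ge0_le0 // ltW.
  move: hq; rewrite /t; nra.
- move: cuE; rewrite /t; nra.
- exact: Su.
Qed.

End K.

Lemma bc_scalar (R : realType) (pA pB l0 mu e : R) : 0 <= pA -> 0 <= pB -> 0 < mu ->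
  mu <= l0 -> mu <= 1 - l0 -> 0 <= e -> e <= mu ->
  (l0 - e^+2/mu) * pA + (1 - l0 - e^+2/mu) * pB <=
  Num.sqrt ((l0 + e) * pA + (1 - (l0 + e)) * pB) *
  Num.sqrt ((l0 - e) * pA + (1 - (l0 - e)) * pB).
Proof.
move=> hA hB hm h1 h2 he1 he2.
have q1 : 0 <= (l0 + e) * pA + (1 - (l0 + e)) * pB.
  have : 0 <= (l0 + e) * pA by apply: mulr_ge0; lra.
  have : 0 <= (1 - (l0 + e)) * pB by apply: mulr_ge0; lra.
  lra.
rewrite -sqrtrM //.
set y := (X in X <= _).
have [y0|y0] := leP y 0; first exact: le_trans y0 (sqrtr_ge0 _).
rewrite -(ger0_norm (ltW y0)) -sqrtr_sqr; apply: ler_wsqrtr.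
have ey : mu * y = mu * (l0 * pA + (1 - l0) * pB) - e^+2 * (pA + pB).
  rewrite /y; field; lra.
set p0 := l0 * pA + (1 - l0) * pB in ey.
have hp0 : mu * (pA + pB) <= p0.
  rewrite /p0; have : mu * pA <= l0 * pA by apply: ler_wpM2r.
  have : mu * pB <= (1 - l0) * pB by apply: ler_wpM2r.
  lra.
have E : (l0 + e) * pA + (1 - (l0 + e)) * pB = p0 + e * (pA - pB) by rewrite /p0; ring.
have E2 : (l0 - e) * pA + (1 - (l0 - e)) * pB = p0 - e * (pA - pB) by rewrite /p0; ring.
rewrite E E2.
suff : mu^+2 * y^+2 <= mu^+2 * ((p0 + e * (pA - pB)) * (p0 - e * (pA - pB))).
  by rewrite ler_pM2l // exprn_gt0.
have -> : mu^+2 * y^+2 = (mu * y)^+2 by rewrite exprMn.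
rewrite ey.
have s0 : 0 <= pA + pB by lra.
have d2 : (pA - pB)^+2 <= (pA + pB)^+2 by nra.
have e2 : e^+2 <= mu^+2 by nra.
have k1 : mu^+2 * e^+2 * (pA - pB)^+2 <= mu^+2 * e^+2 * (pA + pB)^+2.
  by apply: ler_wpM2l => //; apply: mulr_ge0; apply: sqr_ge0.
have k2 : e^+2 * e^+2 * (pA + pB)^+2 <= e^+2 * mu^+2 * (pA + pB)^+2.
  by apply: ler_wpM2r; [apply: sqr_ge0 | apply: ler_wpM2l => //; apply: sqr_ge0].
have k3 : 2 * mu * e^+2 * (pA + pB) * (mu * (pA + pB)) <= 2 * mu * e^+2 * (pA + pB) * p0.
  apply: ler_wpM2l => //; apply: mulr_ge0 => //; apply: mulr_ge0; last exact: sqr_ge0.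
  lra.
nra.
Qed.

Section Ar.
Variable R : realType.
Implicit Types (x y : R).

Lemma lt08 : (0:R) < 8. Proof. lra. Qed.

Lemma ar_l (l0 mu eps kap : R) : mu <= l0 -> mu <= 1 - l0 -> 0 <= eps -> eps <= kap ->
  kap = mu / 12 -> 0 < mu ->
  [/\ 0 <= l0 + eps <= 1, 0 <= l0 - eps <= 1, eps <= mu & 0 <= l0 <= 1].
Proof.
move=> h1 h2 h3 h4 hk h5; rewrite hk in h4; split; try (apply/andP; split); lra.
Qed.

Lemma ar_gap (qAu qBu qAb qBb qAx qBx l0 e G1 G2 : R) :
  (l0+e)*qAu + (1-(l0+e))*qBu - ((l0+e)*qAx + (1-(l0+e))*qBx) <= G1 ->
  (l0-e)*qAb + (1-(l0-e))*qBb - ((l0-e)*qAx + (1-(l0-e))*qBx) <= G2 ->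
  l0*qAx + (1-l0)*qBx <= l0*qAb + (1-l0)*qBb ->
  l0*qAu + (1-l0)*qBu = l0*qAb + (1-l0)*qBb ->
  e * ((qAu - qBu) - (qAb - qBb)) <= G1 + G2.
Proof. move=> *; lra. Qed.

Lemma ar_sum (l0 mu e X : R) :
  (l0 - e^+2/mu) * 1 + (1 - l0 - e^+2/mu) * 1 <= X -> 1 - 2 / mu * e^+2 <= X.
Proof. move=> H; apply: le_trans H; lra. Qed.

Lemma ar_b0 (mu eps kap : R) : 0 < mu -> mu <= 1 -> kap = mu / 12 -> 0 <= eps ->
  eps <= kap -> 0 <= 1 - 2 / mu * eps^+2.
Proof.
move=> m0 m1 -> e0 ek.
have : eps^+2 <= (mu/12)^+2 by rewrite ler_sqr // ?nnegrE //; lra.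
move=> H.
have : 2 / mu * eps^+2 <= 2 / mu * (mu / 12)^+2.
  by apply: ler_wpM2l => //; rewrite divr_ge0 // ltW.
have -> : 2 / mu * (mu / 12)^+2 = mu / 72 by field; rewrite gt_eqF.
lra.
Qed.

Lemma ar_hbs (mu eps kap T s : R) : 0 < mu -> mu <= 1 -> kap = mu / 12 -> 0 <= eps ->
  eps^+2 * T <= kap^+2 -> 0 <= s <= T -> 5/6 <= 1 - s * (2/mu * eps^+2).
Proof.
move=> m0 m1 -> e0 eT /andP[s0 sT].
have om : 0 <= 2/mu * eps^+2 by rewrite mulr_ge0 ?exprn_ge0 ?divr_ge0 // ltW.
have H1 : s * (2/mu * eps^+2) <= T * (2/mu * eps^+2) by apply: ler_wpM2r.
have H2 : T * (2/mu * eps^+2) = 2 / mu * (eps^+2 * T) by field; rewrite gt_eqF.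
have H3 : 2 / mu * (eps^+2 * T) <= 2 / mu * (mu/12)^+2.
  by apply: ler_wpM2l => //; rewrite divr_ge0 // ltW.
have H4 : 2 / mu * (mu/12)^+2 = mu / 72 by field; rewrite gt_eqF.
lra.
Qed.

Lemma ar_final (g SS T x y gam kap sT : R) : 0 <= g -> T * (5/6) <= SS ->
  3/2 * g * SS * (1 * 1) - T * (g / 2) * (1^+2 + 1^+2) <= 1^+2 * x + 1^+2 * y ->
  y <= x -> g * T = gam * (kap * sT) -> gam * kap / 8 * sT <= x.
Proof.
move=> g0 hS key le gT.
have : 3/2 * g * (T * (5/6)) <= 3/2 * g * SS by apply: ler_wpM2l => //; lra.
rewrite !mul1r !expr1n !mul1r mulr1 in key.
nra.
Qed.

End Ar.

Arguments lt08 {R}. Arguments ar_l {R l0 mu eps kap}.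
Arguments ar_gap {R qAu qBu qAb qBb qAx qBx l0 e G1 G2}.
Arguments ar_sum {R l0 mu e X}. Arguments ar_b0 {R mu eps kap}.
Arguments ar_hbs {R mu eps kap T s}. Arguments ar_final {R g SS T x y gam kap sT}.
Arguments bernoulli {R b n}.
Arguments nrm {R d}. Arguments rk1 {R d}. Arguments mix {R d}.
Arguments mean_rk1_lt {R d}. Arguments density_rk1 {R d}. Arguments density_mix {R d}.
Arguments mean_proj_ge0 {R d}. Arguments mean_sum {R d}. Arguments mean_one {R d}.
Arguments mean_mix {R d}. Arguments gap_lb {R d k}. Arguments gap_ge0 {R d k}.
Arguments kink {R k}.
Theorem mainTheorem5 (R : realType) (d k : nat) (O : 'I_k -> 'M[R[i]]_d)
    (m : 'I_k -> nat) (lam : forall a, 'I_(m a) -> R)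
    (P : forall a, 'I_(m a) -> 'M[R[i]]_d) :
  (forall a, is_hermitian (O a)) ->
  (forall a, \tr (O a) = 0) ->
  (forall a, spectral_decomp (O a) (lam a) (P a)) ->
  (exists (a b : 'I_k) (psiA psiB : 'cV[R[i]]_d),
      [/\ a != b, top_eigvec (O a) psiA, top_eigvec (O b) psiB,
          forall i, i != a -> qform (O i) psiA < qform (O a) psiA
        & forall j, j != b -> qform (O j) psiB < qform (O b) psiB]) ->
  exists CA : R, 0 < CA /\
    forall (T : nat) (pi : policy R k), valid_policy pi ->
      exists rho : 'M[R[i]]_d, density rho /\
        CA * Num.sqrt (T%:R) <= exp_regret O lam P rho pi T.
Proof.
move=> _ _ sd [a [b [psiA [psiB [ab [nzA _] [nzB _] HA HB]]]]].
pose rA := rk1 psiA; pose rB := rk1 psiB.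
pose qA x := mean rA (O x); pose qB x := mean rB (O x).
have HA' : forall x, x != a -> qA x < qA a.
  by move=> x /HA H; apply: mean_rk1_lt.
have HB' : forall x, x != b -> qB x < qB b.
  by move=> x /HB H; apply: mean_rk1_lt.
have [l0 [u [/andP[l00 l01] Hmax Hu Htu]]] := kink qA qB a b ab HA' HB'.
pose mu := Num.min l0 (1 - l0).
have mu0 : 0 < mu by rewrite lt_min l00 subr_gt0 l01.
have mul0 : mu <= l0 by rewrite ge_min lexx.
have mul1 : mu <= 1 - l0 by rewrite ge_min lexx orbT.
have mu1 : mu <= 1 by apply: le_trans mul0 (ltW l01).
pose gam := (qA u - qB u) - (qA b - qB b).
have gam0 : 0 < gam by rewrite subr_gt0.
pose kap := mu / 12.
have kapE : kap = mu / 12 by [].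
have kap0 : 0 < kap by apply: divr_gt0 => //; rewrite ltr0n.
exists (gam * kap / 8); split; first by apply: divr_gt0; [exact: mulr_gt0 | exact: lt08].
move=> T pi vp.
pose sT := Num.sqrt (T%:R : R).
pose eps := kap / sT.
have sT0 : 0 <= sT by exact: sqrtr_ge0.
have sTT : sT * sT = T%:R by rewrite -expr2 sqr_sqrtr // ler0n.
have eps0 : 0 <= eps by rewrite divr_ge0 // ltW.
have dA := density_rk1 psiA nzA; have dB := density_rk1 psiB nzB.
have [T0|T1] := eqVneq T 0%N.
  exists (mix l0 rA rB); split.
    by apply: density_mix => //; apply/andP; split; exact: ltW.
  rewrite T0 mulr0n sqrtr0 mulr0; exact: lexx.
have s1 : 1 <= sT.
  rewrite /sT; have := @ler_wsqrtr R 1 T%:R; rewrite sqrtr1; apply.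
  by rewrite ler1n lt0n.
have sp : 0 < sT by apply: lt_le_trans s1; exact: ltr01.
have epsk : eps <= kap.
  by rewrite /eps ler_pdivrMr // ler_peMr // ltW.
have epsT : eps * T%:R = kap * sT.
  by rewrite -sTT /eps; field; rewrite gt_eqF.
have eps2T : eps^+2 * T%:R <= kap^+2.
  have -> : eps^+2 * T%:R = kap^+2 by rewrite -sTT /eps; field; rewrite gt_eqF.
  exact: lexx.
have [l1r l2r em _] := ar_l mul0 mul1 eps0 epsk kapE mu0.
pose l1 := l0 + eps; pose l2 := l0 - eps.
pose r1 := mix l1 rA rB; pose r2 := mix l2 rA rB.
have d1 : density r1 by exact: density_mix.
have d2 : density r2 by exact: density_mix.
have pAge a' i : 0 <= mean rA (P a' i).
  by apply: mean_proj_ge0 => //; have [_ /(_ i) [] ] := sd a'.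
have pBge a' i : 0 <= mean rB (P a' i).
  by apply: mean_proj_ge0 => //; have [_ /(_ i) [] ] := sd a'.
have sumP (r : 'M[R[i]]_d) a' : density r -> \sum_i mean r (P a' i) = 1.
  move=> dr; rewrite -mean_sum; have [_ _ _ -> _] := sd a'; exact: mean_one.
have p1ge a' i : 0 <= mean r1 (P a' i).
  rewrite mean_mix; move: l1r => /andP[h1 h2].
  by apply: addr_ge0; apply: mulr_ge0 => //; rewrite subr_ge0.
have p2ge a' i : 0 <= mean r2 (P a' i).
  rewrite mean_mix; move: l2r => /andP[h1 h2].
  by apply: addr_ge0; apply: mulr_ge0 => //; rewrite subr_ge0.
pose g := eps * gam.
pose beta := 1 - 2 / mu * eps^+2.
have hg : forall x, g <= gap O r1 x + gap O r2 x.
  move=> x; have G1 := gap_lb O r1 x u; have G2 := gap_lb O r2 x b.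
  rewrite !mean_mix in G1 G2.
  exact: (ar_gap G1 G2 (Hmax x) Hu).
have g0 : 0 <= g by rewrite mulr_ge0 // ltW.
have b0 : 0 <= beta by exact: (ar_b0 mu0 mu1 kapE eps0 epsk).
have hb : forall x, beta <= \sum_i Num.sqrt (mean r1 (P x i)) * Num.sqrt (mean r2 (P x i)).
  move=> x.
  have H : \sum_i ((l0 - eps^+2/mu) * mean rA (P x i) + (1 - l0 - eps^+2/mu) * mean rB (P x i))
      <= \sum_i Num.sqrt (mean r1 (P x i)) * Num.sqrt (mean r2 (P x i)).
    apply: ler_sum => i _; rewrite !mean_mix /l1 /l2.
    exact: bc_scalar.
  rewrite big_split /= -!mulr_sumr !sumP // in H.
  exact: ar_sum H.
have key := @regret_lb R d k O m lam P r1 r2 pi g beta vp p1ge p2ge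
   (fun a' => sumP r1 a' d1) (fun a' => sumP r2 a' d2) hg g0 b0 hb T [::] 1 1 ler01 ler01.
have hbs : forall s : 'I_T, 5/6 <= beta ^+ s.
  move=> s.
  have b1 : beta <= 1.
    by rewrite /beta lerBlDr lerDl mulr_ge0 // ?divr_ge0 ?exprn_ge0 // ltW.
  apply: le_trans (@bernoulli R beta s (ltac:(by apply/andP; split))).
  rewrite /beta subKr.
  apply: (ar_hbs mu0 mu1 kapE eps0 eps2T).
  by rewrite ler0n /= ler_nat ltnW.
have Ssum : T%:R * (5/6) <= \sum_(s < T) beta ^+ s.
  have := @ler_sum _ _ (index_enum _) xpredT _ _ (fun s (_ : true) => hbs s).
  by move=> H; apply: le_trans H; rewrite sumr_const card_ord mulrC mulr_natr.
have gT : g * T%:R = gam * (kap * sT) by rewrite /g -epsT; ring.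
have [le|lt] := leP (exp_regret O lam P r2 pi T) (exp_regret O lam P r1 pi T).
- exists r1; split => //.
  exact: (ar_final g0 Ssum key le gT).
- exists r2; split => //.
  have key' : 3/2 * g * (\sum_(s < T) beta ^+ s) * (1 * 1) - T%:R * (g / 2) * (1^+2 + 1^+2)
     <= 1^+2 * exp_regret O lam P r2 pi T + 1^+2 * exp_regret O lam P r1 pi T.
    by rewrite [X in _ <= X]addrC; exact: key.
  exact: (ar_final g0 Ssum key' (ltW lt) gT).
Qed.
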